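(* Let $d\ge2$ and let $\mathcal{G},\mathcal{H}\subseteq\binom{\mathbb{N}}{d}$ be finite families with $|\mathcal{G}|=|\mathcal{H}|$. If $\mathcal{G}$ is compressed and $\mathcal{H}$ is both left-compressed and right-compressed, then $|\mathrm{Inc}(\mathcal{G})|\le|\mathrm{Inc}(\mathcal{H})|$.
   Context: $\mathbb{N}=\{1,2,3,\dots\}$, $\mathbb{N}_{>k}=\{k+1,k+2,\dots\}$. $\binom{S}{d}$ is the set of $d$-element subsets of $S$; elements are written $\mathbf{u}=(u_1,\ldots,u_d)$ with $u_1<\cdots<u_d$. Squashed order: $\mathbf{u}<\mathbf{v}$ iff the largest element of the symmetric difference of $\mathbf{u},\mathbf{v}$ belongs to $\mathbf{v}$. A finite family in $\binom{\mathbb{N}}{e}$ (resp. $\binom{\mathbb{N}_{>k}}{e}$) is compressed (in it) if it consists of the smallest elements of $\binom{\mathbb{N}}{e}$ (resp. $\binom{\mathbb{N}_{>k}}{e}$) in the squashed order. For $\mathcal{F}\subseteq\binom{\mathbb{N}}{d}$ and $k\ge1$: $\widehat{\mathcal{F}}_{1,k}=\{\widehat{\mathbf{u}}\in\binom{\mathbb{N}_{>k}}{d-1}\mid \{k\}\cup\widehat{\mathbf{u}}\in\mathcal{F}\}$ and $\widehat{\mathcal{F}}_{d,k}=\{\widehat{\mathbf{u}}\in\binom{\mathbb{N}}{d-1}\mid \max\widehat{\mathbf u}<k,\ \widehat{\mathbf{u}}\cup\{k\}\in\mathcal{F}\}$. $\mathcal{F}$ is left-compressed if every $\widehat{\mathcal{F}}_{1,k}$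 is compressed in $\binom{\mathbb{N}_{>k}}{d-1}$, and right-compressed if every $\widehat{\mathcal{F}}_{d,k}$ is compressed in $\binom{\mathbb{N}}{d-1}$. $\mathrm{Inc}_1$ is the set of maps $\pi\colon\mathbb{N}\to\mathbb{N}$ with $\pi(j)<\pi(j+1)$ and $\pi(j)\le j+1$ for all $j$, acting by $\pi(\mathbf{u})=(\pi(u_1),\ldots,\pi(u_d))$; $\mathrm{Inc}(\mathcal{F})=\{\pi(\mathbf{u})\mid\mathbf{u}\in\mathcal{F},\pi\in\mathrm{Inc}_1\}$. *)

(* Defs.v *)
From mathcomp Require Import all_boot.
Set Implicit Arguments. Unset Strict Implicit. Unset Printing Implicit Defensive.

(* A finite subset of N = {1,2,...} is represented by the strictly increasing
   list of its elements.  [is_dset k e u] : u is an element of binom(N_{>k}, e);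
   binom(N, e) is the case k = 0. *)
Definition is_dset (k e : nat) (u : seq nat) : bool :=
  [&& sorted ltn u, size u == e & all (fun x => k < x) u].

Definition squashed_lt (u v : seq nat) : Prop :=
  exists x, [/\ x \in v, x \notin u &
    forall y, x < y -> (y \in u) = (y \in v)].

Definition compressed_in (k e : nat) (P : seq nat -> Prop) : Prop :=
  (forall u, P u -> is_dset k e u) /\
  (forall u v, P v -> is_dset k e u -> squashed_lt u v -> P u).

Definition hatF1 (d k : nat) (F : seq (seq nat)) (u : seq nat) : Prop :=
  is_dset k d.-1 u /\ (k :: u) \in F.

Definition hatFd (d k : nat) (F : seq (seq nat)) (u : seq nat) : Prop :=
  [/\ is_dset 0 d.-1 u, all (fun x => x < k) u & rcons u k \in F].

Definition left_compressed (d : nat) (F : seq (seq nat)) : Prop :=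
  forall k, 1 <= k -> compressed_in k d.-1 (hatF1 d k F).

Definition right_compressed (d : nat) (F : seq (seq nat)) : Prop :=
  forall k, 1 <= k -> compressed_in 0 d.-1 (hatFd d k F).

(* Inc_1: maps pi : N -> N with pi(j) < pi(j+1) and pi(j) <= j+1 for j in N.
   (The value at 0 is irrelevant.) *)
Definition Inc1 (pi : nat -> nat) : Prop :=
  forall j, 1 <= j -> [/\ 1 <= pi j, pi j < pi j.+1 & pi j <= j.+1].

Definition IncF (F : seq (seq nat)) (w : seq nat) : Prop :=
  exists u pi, [/\ u \in F, Inc1 pi & w = map pi u].

(* s is a duplicate-free enumeration of the set P (so |P| = size s). *)
Definition enumerates (s : seq (seq nat)) (P : seq nat -> Prop) : Prop :=
  uniq s /\ forall w, w \in s <-> P w.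

(* Main.v *)
Require Import Defs.
From mathcomp Require Import all_boot zify.
Set Implicit Arguments. Unset Strict Implicit. Unset Printing Implicit Defensive.

Lemma bin_big d m : 1 <= d -> m < 'C(m + d, d).
Proof.
case: d => // d _; elim: d m => [|d IH] m; first by rewrite bin1; lia.
rewrite addnS binS; have := IH m; lia.
Qed.

Definition top (d m : nat) : nat := find (fun n => m < 'C(n.+1, d)) (iota 0 (m + d)).

Lemma top_spec d m : 1 <= d -> 'C(top d m, d) <= m < 'C((top d m).+1, d).
Proof.
move=> d1; rewrite /top.
set p := (fun n => m < 'C(n.+1, d)).
have hh : has p (iota 0 (m + d)).
  apply/hasP; exists (m + d).-1; first by rewrite mem_iota; lia.
  rewrite /p prednK; [exact: bin_big| lia].
have := nth_find 0 hh; rewrite /p nth_iota ?add0n -?has_find //.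
move=> ->; rewrite andbT.
case E: (find p (iota 0 (m + d))) => [|t]; first by rewrite bin0n; have -> : (d == 0) = false by lia.
have := before_find 0 (_ : t < find p (iota 0 (m + d))).
rewrite E => /(_ (ltnSn t)); rewrite /p nth_iota ?add0n; last first.
  have := find_size p (iota 0 (m+d)); rewrite size_iota E; lia.
  by move/negbT; rewrite -leqNgt.
by rewrite -{2}(size_iota 0 (m+d)) -has_find.
Qed.

Lemma top_uniq d m n : 1 <= d -> 'C(n, d) <= m < 'C(n.+1, d) -> top d m = n.
Proof.
move=> d1 /andP[h1 h2]; have /andP[t1 t2] := top_spec m d1.
case: (ltngtP (top d m) n) => // h.
- have := leq_bin2l d h; lia.
- have := leq_bin2l d h; lia.
Qed.

Fixpoint Phi (d m : nat) : nat :=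
  if d is d'.+1 then
    (if m is 0 then 0 else 'C((top d m).+1, d) + Phi d' (m - 'C(top d m, d)))
  else m.

Lemma Phi0 d : Phi d 0 = 0.
Proof. by case: d. Qed.

Lemma Phi_S d m : 0 < m ->
  Phi d.+1 m = 'C((top d.+1 m).+1, d.+1) + Phi d (m - 'C(top d.+1 m, d.+1)).
Proof. by case: m. Qed.

Lemma PhiC e n : e <= n -> Phi e 'C(n, e) = 'C(n.+1, e).
Proof.
case: e => [|e] en; first by rewrite /= !bin0.
have c1 : 0 < 'C(n, e.+1) by rewrite bin_gt0.
have c2 : 0 < 'C(n, e) by rewrite bin_gt0; lia.
rewrite Phi_S //.
have -> : top e.+1 'C(n, e.+1) = n by apply: top_uniq => //; rewrite binS; lia.
by rewrite subnn Phi0 addn0.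
Qed.

Lemma PhiB d n r : 0 < r <= 'C(n, d) ->
  Phi d.+1 ('C(n, d.+1) + r) = 'C(n.+1, d.+1) + Phi d r.
Proof.
move=> /andP[r0 rn].
have dn : d <= n by rewrite -bin_gt0; lia.
case: (ltngtP r 'C(n, d)) rn => // hr _.
  rewrite Phi_S; last lia.
  have -> : top d.+1 ('C(n, d.+1) + r) = n by apply: top_uniq => //; rewrite binS; lia.
  by rewrite addKn.
rewrite hr -binS (PhiC (_ : d.+1 <= n.+1)) // (PhiC dn).
by rewrite binS.
Qed.

Lemma rep d m : 0 < m -> exists n r, m = 'C(n, d.+1) + r /\ 0 < r <= 'C(n, d).
Proof.
move=> m0; have /andP[h1 h2] := top_spec m (ltn0Sn d).
set t := top d.+1 m in h1 h2.
case: (ltngtP 'C(t, d.+1) m) h1 => // h _.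
  by exists t, (m - 'C(t, d.+1)); move: h2; rewrite binS; lia.
have ht : d.+1 <= t by rewrite -bin_gt0 h.
exists t.-1, 'C(t.-1, d).
have e1 : t = t.-1.+1 by lia.
split; first by rewrite -h {1}e1 binS.
rewrite leqnn andbT bin_gt0; lia.
Qed.

Lemma Phi_succ e x : Phi e x < Phi e x.+1.
Proof.
elim: e x => [|e IH] x; first by rewrite /=.
case: x => [|x].
  have h := PhiC (leqnn e.+1); rewrite binn in h; by rewrite Phi0 h bin_gt0.
have [n [r [-> /andP[r0 rn]]]] := rep e (ltn0Sn x).
rewrite PhiB ?r0 //.
case: (ltngtP r 'C(n, e)) rn => // hr _.
  rewrite -[('C(n, e.+1) + r).+1]addnS PhiB; last lia.
  by rewrite ltn_add2l IH.
have en : e <= n by rewrite -bin_gt0; lia.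
rewrite hr -binS (PhiC en).
have h1 := PhiB (_ : 0 < 1 <= 'C(n.+1, e)); rewrite addn1 in h1.
rewrite h1; last by rewrite bin_gt0; lia.
have := IH 0; rewrite Phi0 (binS n.+1 e); lia.
Qed.

Lemma Phi_mono_add e x y : Phi e x + y <= Phi e (x + y).
Proof.
elim: y => [|y IH]; first by rewrite !addn0.
have := Phi_succ e (x + y); rewrite !addnS; lia.
Qed.

Lemma Phi_mono e x y : x <= y -> Phi e x <= Phi e y.
Proof. move=> h; have := Phi_mono_add e x (y - x); rewrite subnKC //; lia. Qed.

Lemma Phi_ge e x : x <= Phi e x.
Proof. by have := Phi_mono_add e 0 x; rewrite Phi0. Qed.

Lemma Phi1 m : 0 < m -> Phi 1 m = m.+1.
Proof.
move=> m0; have [n [r [-> /andP[r0 rn]]]] := rep 0 m0.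
move: rn; rewrite bin0 => rn; have -> : r = 1 by lia.
rewrite PhiB //; last by rewrite bin0. by rewrite !bin1 /=; lia.
Qed.

Lemma beta e a b : Phi e.+1 b <= a + b -> Phi e.+1 (a + b) <= a + b + Phi e a.
Proof.
elim: e a b => [|e IH] a b.
  move=> hyp; case: (posnP (a + b)) => [->|m0]; first by rewrite Phi0.
  rewrite (Phi1 m0) /=.
  case: (posnP a) => [a0|a0]; last lia.
  move: hyp m0; rewrite a0 add0n => hyp b0; move: hyp; rewrite Phi1 //; lia.
move=> hyp.
case: (posnP (a + b)) => [->|m0]; first by rewrite Phi0.
have [n [r [hm /andP[r0 rn]]]] := rep e.+1 m0.
suff star : 'C(n, e.+1) + Phi e.+1 r <= r + Phi e.+1 a.
  by rewrite hm PhiB ?r0 // binS; lia.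
have PhiIge := Phi_ge e.+1.
case: (ltngtP 'C(n, e.+2) b) => hb.
-
  exfalso; set s := b - 'C(n, e.+2).
  have hbs : b = 'C(n, e.+2) + s by rewrite /s; lia.
  move: hyp; rewrite hbs PhiB; last by rewrite /s; lia.
  have := PhiIge s; rewrite binS /s; lia.
-
  have ne : e.+2 <= n by rewrite -bin_gt0; lia.
  case: n ne hm rn hb => [|n'] // ne hm rn hb.
  have hsplit : 'C(n'.+1, e.+2) = 'C(n', e.+2) + 'C(n', e.+1) by rewrite binS.
  have en' : e.+1 <= n' by lia.
  have hbig : Phi e.+1 a >= 'C(n'.+2, e.+1) -> 'C(n'.+1, e.+1) + Phi e.+1 r <= r + Phi e.+1 a.
    move=> ha; have := Phi_mono_add e.+1 r ('C(n'.+1, e.+1) - r).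
    rewrite subnKC // PhiC //; lia.
  case: (leqP b 'C(n', e.+2)) => hb2.
  +
    have ha : 'C(n', e.+1) + r <= a by lia.
    case: (leqP r 'C(n', e)) => hr.
    * have := IH r 0; rewrite addn0 Phi0 => /(_ (leq0n _)) hI.
      have := Phi_mono e.+1 ha; rewrite PhiB ?r0 //; lia.
    * apply: hbig; rewrite -PhiC; last lia.
      apply: Phi_mono; rewrite binS; lia.
  +
    set s := b - 'C(n', e.+2).
    have hbs : b = 'C(n', e.+2) + s by rewrite /s; lia.
    have s0 : 0 < s by rewrite /s; lia.
    have sC : s < 'C(n', e.+1) by rewrite /s; lia.
    move: hyp; rewrite hbs PhiB; last by lia.
    move=> hyp.
    have hsr : Phi e.+1 s <= r by lia.
    have := PhiIge s => hss.
    set c := r - s.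
    have hac : a = 'C(n', e.+1) + c by rewrite /c; lia.
    case: (leqP c 'C(n', e)) => hc.
    * have hPa : Phi e.+1 a = 'C(n'.+1, e.+1) + Phi e c.
        rewrite hac; case: (posnP c) => [c0|c0].
          by rewrite c0 addn0 Phi0 addn0 PhiC.
        by rewrite PhiB ?c0.
      have := IH c s; rewrite (_ : c + s = r); last by rewrite /c; lia.
      move=> /(_ hsr); rewrite hPa; lia.
    * apply: hbig; rewrite -PhiC; last lia.
      apply: Phi_mono; rewrite binS; lia.
-
  have ar : a = r by lia.
  have rC : r = 'C(n, e.+1).
    case: (leqP e.+2 n) => ne.
      move: hyp; rewrite -hb PhiC // binS; lia.
    have en : e.+1 <= n by rewrite -bin_gt0; lia.
    move: rn; have -> : n = e.+1 by lia.
    rewrite binn; lia.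
  by rewrite ar rC.
Qed.

Fixpoint incs (u : seq nat) : seq (seq nat) :=
  if u is k :: u' then map succn u :: [seq k :: v | v <- incs u'] else [:: [::]].

Definition incl (F : seq (seq nat)) : seq (seq nat) := flatten (map incs F).

Lemma incs_id u : u \in incs u.
Proof. elim: u => [|k u IH] //=; rewrite inE; apply/orP; right; exact: map_f. Qed.

Lemma incsP k u w : w \in incs (k :: u) ->
  w = map succn (k :: u) \/ exists2 v, v \in incs u & w = k :: v.
Proof. by rewrite /= inE => /orP[/eqP->|/mapP[v hv ->]]; [left|right; exists v]. Qed.

Lemma incs_head u : u != [::] -> map succn u \in incs u.
Proof. by case: u => //= k u _; rewrite inE eqxx. Qed.

Lemma incs_cons k u v : v \in incs u -> k :: v \in incs (k :: u).
Proof. by move=> hv; rewrite /= inE; apply/orP; right; exact: map_f. Qed.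

Definition near (x y : nat) := (x <= y) && (y <= x.+1).

Lemma incs_rel u w : w \in incs u -> all2 near u w.
Proof.
elim: u w => [|k u IH] w; first by rewrite inE => /eqP->.
case/incsP => [->|[v hv ->]] /=.
  rewrite /near leqnn ltnW //=; elim: u {IH} => //= x s ->.
  by rewrite /near leqnn ltnW.
by rewrite /near leqnn ltnW //= IH.
Qed.

Lemma all2_size (r : nat -> nat -> bool) s t : all2 r s t -> size s = size t.
Proof. by elim: s t => [|x s IH] [|y t] //= /andP[_ /IH->]. Qed.

Lemma incl_mem F w : reflect (exists2 u, u \in F & w \in incs u) (w \in incl F).
Proof.
apply: (iffP flattenP) => [[s /mapP[u hu ->] hw]|[u hu hw]]; first by exists u.
by exists (incs u) => //; exact: map_f.
Qed.

Lemma is_dset_cons k e x s :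
  is_dset k e.+1 (x :: s) = (k < x) && is_dset x e s.
Proof.
rewrite /is_dset /= (path_sortedE ltn_trans) eqSS.
case kx: (k < x); last by rewrite !andbF.
case ax: (all (fun y => x < y) s); last by rewrite /= !andbF.
have -> : all (fun y => k < y) s.
  by apply/allP => y ys; move/allP: ax => /(_ y ys); lia.
by rewrite /= !andbT.
Qed.

Lemma is_dset_nil k e : is_dset k e [::] = (e == 0).
Proof. by case: e. Qed.

Lemma is_dset_gt k e s x : is_dset k e s -> x \in s -> k < x.
Proof. by case/and3P => _ _ /allP; apply. Qed.

Lemma incs_dset k e u w : is_dset k e u -> w \in incs u -> is_dset k e w.
Proof.
elim: u k e w => [|x u IH] k e w; first by rewrite inE => ? /eqP->.
case: e => [|e]; first by rewrite /is_dset andbC.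
rewrite is_dset_cons => /andP[kx hu].
case/incsP => [->|[v hv ->]]; last by rewrite is_dset_cons kx (IH _ _ _ hu hv).
rewrite /= is_dset_cons ltnS ltnW //=.
move: hu; rewrite /is_dset => /and3P[s1 s2 s3]; rewrite size_map s2 /=.
rewrite sorted_map; apply/andP; split.
  by apply: sub_sorted s1 => a b /=; rewrite ltnS.
by rewrite all_map; apply: sub_all s3 => a /=; rewrite ltnS.
Qed.

Lemma Inc1_ge pi j : Inc1 pi -> 1 <= j -> j <= pi j.
Proof.
move=> hp; elim: j => // j IH _.
case: j IH => [|j] IH; first by case: (hp 1 (leqnn 1)).
have [_ h _] := hp j.+1 (ltn0Sn _); have := IH (ltn0Sn _); lia.
Qed.

Lemma Inc1_shift pi j i : Inc1 pi -> 1 <= j -> pi j = j.+1 -> pi (j + i) = (j + i).+1.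
Proof.
move=> hp j1 hj; elim: i => [|i IH]; first by rewrite addn0.
have [_ h1 h2] := hp (j + i) (leq_trans j1 (leq_addr _ _)).
have [_ _ h3] := hp (j + i).+1 (ltn0Sn _).
rewrite addnS; lia.
Qed.

Lemma incs_Inc1 u pi : sorted ltn u -> all (fun x => 0 < x) u -> Inc1 pi ->
  map pi u \in incs u.
Proof.
move=> su pu hp; elim: u su pu => [|k u IH] //= su /andP[k0 pu].
have [_ _ hk] := hp k k0; have gk := Inc1_ge hp k0.
case: (ltngtP (pi k) k) => h; first lia.
  have -> : pi k = k.+1 by lia.
  rewrite inE; apply/orP; left; apply/eqP; congr (_ :: _).
  apply/eq_in_map => x xu; move: su; rewrite /= (path_sortedE ltn_trans) => /andP[/allP /(_ x xu) kx _].
  have hk1 : pi k = k.+1 by lia.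
  have := Inc1_shift (x - k) hp k0 hk1; rewrite subnKC //; lia.
rewrite h inE; apply/orP; right; apply: map_f; apply: IH => //.
by move: su; rewrite /= (path_sortedE ltn_trans) => /andP[].
Qed.

Lemma Inc1_incs u w : sorted ltn u -> w \in incs u -> exists pi, Inc1 pi /\ w = map pi u.
Proof.
elim: u w => [|k u IH] w su hw.
  exists succn; split; last by move: hw; rewrite inE => /eqP->.
  by move=> j _; split.
have [->|[v hv ->]] := incsP hw.
  by exists succn; split => // j _; split.
have su' : sorted ltn u by move: su; rewrite /= (path_sortedE ltn_trans) => /andP[].
have [pi' [hp' ->]] := IH v su' hv.
exists (fun j => if j <= k then j else pi' j); split.
  move=> j j1; case: (ltngtP j k) => h.
  - by split.
  - exact: hp' j j1.
  - have := Inc1_ge hp' (ltn0Sn j); split => //; lia.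
rewrite /= leqnn; congr (_ :: _); apply/eq_in_map => x xu.
move: su; rewrite /= (path_sortedE ltn_trans) => /andP[/allP /(_ x xu) kx _].
by rewrite leqNgt kx.
Qed.

Definition DC (k : nat) (H : seq (seq nat)) : Prop :=
  forall u v, u \in H -> is_dset k (size u) v -> all2 leq v u -> v \in H.

Lemma all2_refl s : all2 leq s s.
Proof. by elim: s => //= x s ->; rewrite leqnn. Qed.

Lemma is_dset_mono i j e s : j <= i -> is_dset i e s -> is_dset j e s.
Proof.
move=> ji /and3P[a b c]; apply/and3P; split => //.
by apply: sub_all c => x /=; lia.
Qed.

Lemma is_dset_size k e s : is_dset k e s -> size s = e.
Proof. by case/and3P => _ /eqP. Qed.

Lemma is_dset_sorted k e s : is_dset k e s -> sorted ltn s.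
Proof. by case/and3P. Qed.

Lemma head_le k e w : is_dset k e w -> all (fun x => head 0 w <= x) w.
Proof.
case: w => //= x s /and3P[]; rewrite /= (path_sortedE ltn_trans) => /andP[a _] _ _.
by rewrite leqnn /=; apply: sub_all a => y; lia.
Qed.

Lemma near_lower A q t : all2 near A (map (addn t.+1) q) -> all2 leq q A.
Proof.
elim: A q => [|x A IH] [|y q] //= /andP[h /IH ->]; rewrite andbT.
by move: h; rewrite /near; lia.
Qed.

Lemma near_lower1 A w : all2 near A w -> all2 leq (map (subn^~ 1) w) A.
Proof.
elim: A w => [|x A IH] [|y w] //= /andP[h /IH ->]; rewrite andbT.
by move: h; rewrite /near; lia.
Qed.

Lemma addK_map t w : all (fun x => t <= x) w -> map (addn t) (map (subn^~ t) w) = w.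
Proof.
move=> h; rewrite -map_comp -[RHS]map_id; apply/eq_in_map => x xw /=.
by move/allP: h => /(_ x xw); lia.
Qed.

Lemma dset_addn k e t q : is_dset (k + t) e (map (addn t) q) -> is_dset k e q.
Proof.
case/and3P => a b c; apply/and3P; split.
- move: a; rewrite sorted_map; apply: sub_sorted => x y /=; lia.
- by rewrite size_map in b.
- by move: c; rewrite all_map; apply: sub_all => x /=; lia.
Qed.

Lemma dset_addn2 k e t q : is_dset k e q -> is_dset (k + t) e (map (addn t) q).
Proof.
case/and3P => a b c; apply/and3P; split.
- rewrite sorted_map; apply: sub_sorted a => x y /=; lia.
- by rewrite size_map.
- by rewrite all_map; apply: sub_all c => x /=; lia.
Qed.

Lemma lower_in k H A q t : DC k H -> A \in H -> all2 near A (map (addn t.+1) q) ->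
  is_dset k (size A) q -> q \in H.
Proof. by move=> dH hA hn hq; apply: (dH A) => //; exact: near_lower hn. Qed.

Theorem lowerA d : forall k H, uniq H -> (forall u, u \in H -> is_dset k d u) -> DC k H ->
  Phi d (size H) <= size (undup (incl H)).
Proof.
elim: d => [|d IHd] k H uH hH dH.
  rewrite /=; apply: uniq_leq_size => // u hu; rewrite mem_undup.
  by apply/incl_mem; exists u => //; exact: incs_id.
have: size H <= size H by [].
move: {2}(size H) => n; elim: n k H uH hH dH => [|n IHn] k H uH hH dH hs.
  by move: hs; rewrite leqn0 => /eqP ->; rewrite Phi0.
case: (posnP (size H)) => [->|H0]; first by rewrite Phi0.
set p := fun w : seq nat => head 0 w == k.+1.
set L := [seq behead u | u <- H & p u].
set H' := [seq u <- H | ~~ p u].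
have hHd : forall u, u \in H -> u = head 0 u :: behead u.
  by move=> u /hH /is_dset_size; case: u.
have memL : forall v, (v \in L) = (k.+1 :: v \in H).
  move=> v; apply/idP/idP.
    case/mapP => u; rewrite mem_filter => /andP[pu hu] ->.
    by rewrite -(eqP pu) -hHd.
  by move=> hv; apply/mapP; exists (k.+1 :: v) => //; rewrite mem_filter /p eqxx.
have hsz : size L + size H' = size H.
  by rewrite size_map !size_filter count_predC.
have uL : uniq L.
  rewrite map_inj_in_uniq ?filter_uniq // => u1 u2.
  rewrite !mem_filter => /andP[p1 h1] /andP[p2 h2] hb.
  by rewrite (hHd _ h1) (hHd _ h2) hb (eqP p1) (eqP p2).
have uH' : uniq H' by rewrite filter_uniq.
have hL : forall v, v \in L -> is_dset k.+1 d v.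
  by move=> v; rewrite memL => /hH; rewrite is_dset_cons => /andP[].
have hH' : forall u, u \in H' -> is_dset k.+1 d.+1 u.
  move=> u; rewrite mem_filter => /andP[pu hu].
  move: (hH u hu) pu; rewrite (hHd u hu) !is_dset_cons /p /= => /andP[kx ->].
  by rewrite andbT; lia.
have dL : DC k.+1 L.
  move=> u v; rewrite !memL => hu hv hvu; apply: (dH _ _ hu).
    by rewrite /= is_dset_cons ltnSn.
  by rewrite /= leqnn.
have dH' : DC k.+1 H'.
  move=> u v; rewrite !mem_filter => /andP[pu hu] hv hvu.
  have hv' := is_dset_mono (leqnSn k) hv.
  rewrite (dH _ _ hu hv' hvu) andbT /p.
  have sz : size u = d.+1 := is_dset_size (hH u hu).
  rewrite sz in hv.
  case: v hv {hv' hvu} => [|x v]; first by rewrite is_dset_nil.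
  by rewrite is_dset_cons /= => /andP[kx _]; lia.
have L0 : 0 < size L.
  have [u hu] : exists u, u \in H.
    by case: (H) H0 => // u ? _; exists u; rewrite mem_head.
  have := hH u hu; rewrite (hHd u hu) is_dset_cons => /andP[kx hs'].
  have hv : k.+1 :: behead u \in H.
    apply: (dH _ _ hu); first by rewrite (is_dset_size (hH u hu)) is_dset_cons ltnSn (is_dset_mono kx hs').
    by rewrite {2}(hHd u hu) /= kx all2_refl.
  rewrite -memL in hv.
  by rewrite lt0n size_eq0; apply/eqP => L0'; rewrite L0' in hv.
have IH1 : Phi d.+1 (size H') <= size (undup (incl H')).
  apply: (IHn k.+1 H') => //; move: hsz L0 hs; move: (size L) (size H') (size H) => a b c; lia.
have IH2 : Phi d (size L) <= size (undup (incl L)) := IHd k.+1 L uL hL dL.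
set X := undup (incl H).
have c1 : size (undup (incl L)) <= count p X.
  rewrite -size_filter -(size_map (cons k.+1) (undup (incl L))); apply: uniq_leq_size.
    by rewrite map_inj_uniq ?undup_uniq // => ? ? [].
  move=> w /mapP[v hv ->]; rewrite mem_filter /p eqxx /= mem_undup.
  move: hv; rewrite mem_undup => /incl_mem [u' hu' hv].
  by apply/incl_mem; exists (k.+1 :: u'); [rewrite -memL | exact: incs_cons].
have c2 : size H <= count (predC p) X.
  rewrite -size_filter -(size_map (map succn) H); apply: uniq_leq_size.
    by rewrite map_inj_uniq //; exact: (inj_map succn_inj).
  move=> w /mapP[u hu ->]; rewrite mem_filter mem_undup; apply/andP; split.
    have := hH u hu; rewrite (hHd u hu) is_dset_cons /= /p => /andP[kx _].
    by rewrite eqSS; lia.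
  by apply/incl_mem; exists u => //; apply: incs_head; rewrite (hHd u hu).
set Y := undup (incl H').
set q := fun w : seq nat => w \in H'.
have cY1 : count q Y <= size H'.
  rewrite -size_filter; apply: uniq_leq_size; first by rewrite filter_uniq ?undup_uniq.
  by move=> w; rewrite mem_filter => /andP[].
have key : forall w, w \in filter (predC q) Y ->
   [/\ exists2 A, A \in H' & w \in incs A, is_dset k.+1 d.+1 w, k.+1 < head 0 w
     & w = map (addn (head 0 w - k.+1)) (map (subn^~ (head 0 w - k.+1)) w)].
  move=> w; rewrite mem_filter mem_undup => /andP[_ /incl_mem [A hA hw]].
  have dw := incs_dset (hH' A hA) hw.
  have hw1 : k.+1 < head 0 w.
    case: w dw {hw} => [|x w]; first by rewrite is_dset_nil.
    by rewrite is_dset_cons => /andP[].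
  split => //; first by exists A.
  rewrite addK_map //; apply: sub_all (head_le dw) => x /=; lia.
set psi := fun w : seq nat => behead (map (subn^~ (head 0 w - k.+1)) w).
have kpsi : forall w, w \in filter (predC q) Y ->
    map (subn^~ (head 0 w - k.+1)) w = k.+1 :: psi w /\
    map (subn^~ (head 0 w - k.+1)) w \in H.
  move=> w hw; have [[A hA hwA] dw hw1 hrep] := key w hw.
  have hAH : A \in H by move: hA; rewrite mem_filter => /andP[].
  have dA := hH' A hA.
  have e1 : map (subn^~ (head 0 w - k.+1)) w = k.+1 :: psi w.
    rewrite /psi; case: w hw1 {hw dw hrep hwA} => [|x w] /= hw1; first lia.
    by congr (_ :: _); lia.
  split => //.
  apply: (lower_in (t := (head 0 w - k.+1).-1) dH hAH).
    have -> : (head 0 w - k.+1).-1.+1 = head 0 w - k.+1 by lia.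
    by rewrite -hrep; exact: incs_rel.
  have dwt : is_dset (k + (head 0 w - k.+1)) d.+1 w.
    case/and3P: (dw) => a b c; apply/and3P; split => //.
    by apply: sub_all (head_le dw) => x /=; lia.
  rewrite (is_dset_size dA); apply: (@dset_addn k d.+1 (head 0 w - k.+1)).
  by rewrite -hrep.
have asym : forall w1 w2, w1 \in filter (predC q) Y -> w2 \in filter (predC q) Y ->
    map (subn^~ (head 0 w1 - k.+1)) w1 = map (subn^~ (head 0 w2 - k.+1)) w2 ->
    head 0 w1 - k.+1 < head 0 w2 - k.+1 -> False.
  move=> w1 w2 h1 h2 eP ht.
  have [_ dw1 hw1 r1] := key w1 h1; have [[A2 hA2 hw2A] dw2 hw2 r2] := key w2 h2.
  have hA2H : A2 \in H by move: hA2; rewrite mem_filter => /andP[].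
  have e21 : map (addn (head 0 w2 - k.+1 - (head 0 w1 - k.+1))) w1 = w2.
    move: r1 r2 eP ht; set t1 := head 0 w1 - k.+1; set t2 := head 0 w2 - k.+1.
    move=> r1 r2 eP ht.
    rewrite [RHS]r2 -eP [in LHS]r1 -map_comp; apply/eq_map => x /=; lia.
  have w1H : w1 \in H.
    apply: (lower_in (t := (head 0 w2 - k.+1 - (head 0 w1 - k.+1)).-1) dH hA2H).
      have -> : (head 0 w2 - k.+1 - (head 0 w1 - k.+1)).-1.+1 =
                 head 0 w2 - k.+1 - (head 0 w1 - k.+1) by lia.
      by rewrite e21; exact: incs_rel.
    by rewrite (is_dset_size (hH' A2 hA2)); exact: is_dset_mono (leqnSn k) dw1.
  move: h1; rewrite mem_filter /= /q mem_filter w1H andbT /p => /andP[/negP hh _].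
  by apply: hh; apply/eqP; lia.
have cY2 : count (predC q) Y <= size L.
  rewrite -size_filter -(size_map psi (filter (predC q) Y)); apply: uniq_leq_size.
    rewrite map_inj_in_uniq ?filter_uniq ?undup_uniq // => w1 w2 h1 h2 he.
    have [e1 _] := kpsi w1 h1; have [e2 _] := kpsi w2 h2.
    have eP : map (subn^~ (head 0 w1 - k.+1)) w1 = map (subn^~ (head 0 w2 - k.+1)) w2.
      by rewrite e1 e2 he.
    case: (ltngtP (head 0 w1 - k.+1) (head 0 w2 - k.+1)) => ht.
    - by case: (asym w1 w2 h1 h2 eP ht).
    - by case: (asym w2 w1 h2 h1 (esym eP) ht).
    have [_ _ _ r1] := key w1 h1; have [_ _ _ r2] := key w2 h2.
    by rewrite r1 r2 eP ht.
  move=> v /mapP[w hw ->]; rewrite memL; have [e hP] := kpsi w hw.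
  by rewrite -e.
have hY : size Y <= size H' + size L.
  by move: cY1 cY2; rewrite -(count_predC q Y); lia.
have hb : Phi d.+1 (size H') <= size L + size H' by move: IH1 hY; rewrite -/Y; lia.
have := beta hb; rewrite hsz => hbeta.
move: (count_predC p X) c1 c2 IH2 hbeta.
move: (count p X) (count (predC p) X) (size X) (Phi d.+1 (size H)) (Phi d (size L)) => ? ? ? ? ?; lia.
Qed.

Lemma is_dset_rcons k e s x :
  is_dset k e.+1 (rcons s x) = [&& is_dset k e s, all (fun y => y < x) s & k < x].
Proof.
elim: s k e => [|y s IH] k e.
  by rewrite /is_dset /= andbT eqSS eq_sym; case: (e == 0); rewrite ?andbF.
case: e => [|e].
  by rewrite /is_dset size_rcons /= !andbF.
rewrite rcons_cons is_dset_cons IH is_dset_cons /=.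
case ky: (k < y) => //=; case: (is_dset y e s) => //=.
case: (all (fun z => z < x) s) => /=; last by rewrite !andbF.
rewrite andbT; case yx: (y < x) => /=; lia.
Qed.

Fixpoint subs (M d : nat) : seq (seq nat) :=
  if M is M'.+1 then
    (if d is d'.+1 then subs M' d ++ map (rcons^~ M) (subs M' d') else [:: [::]])
  else (if d is 0 then [:: [::]] else [::]).

Lemma size_subs M d : size (subs M d) = 'C(M, d).
Proof.
elim: M d => [|M IH] [|d] //=; by rewrite size_cat size_map !IH binS.
Qed.

Lemma mem_subs M d v : (v \in subs M d) = is_dset 0 d v && all (fun x => x <= M) v.
Proof.
elim: M d v => [|M IH] [|d] v /=.
- by rewrite inE /is_dset; case: v => //= x v; rewrite !andbF.
- case: v => [|x v]; first by rewrite in_nil is_dset_nil.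
  by rewrite in_nil is_dset_cons /= leqn0; case: x => [|x] /=; rewrite ?andbF.
- by rewrite inE /is_dset; case: v => //= x v; rewrite !andbF.
rewrite mem_cat IH.
case/lastP: v => [|v x].
  by rewrite is_dset_nil /=; apply/negbTE/mapP => -[v _]; case: v.
rewrite is_dset_rcons !all_rcons.
have -> : (rcons v x \in [seq rcons i M.+1 | i <- subs M d]) = (x == M.+1) && (v \in subs M d).
  apply/mapP/andP => [[v' hv' he]|[/eqP-> hv]]; last by exists v.
  by move: (he) => /rcons_inj [-> ->].
rewrite IH.
case hd: (is_dset 0 d v); last by rewrite /= ?andbF.
case av: (all (fun y => y < x) v); last first.
  rewrite /=; apply/negbTE/andP => -[/eqP hx a1]; move/negbT: av => /negP; apply.
  by apply: sub_all a1 => y /=; lia.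
have a1 : x <= M.+1 -> all (fun y => y <= M) v.
  by move=> h; apply: sub_all av => y /=; lia.
have a2 : x <= M.+1 -> all (fun y => y <= M.+1) v.
  by move=> h; apply: sub_all av => y /=; lia.
case: (leqP x M) => hxM.
- have e1 : (x == M.+1) = false by lia.
  have e2 : (x <= M.+1) = true by lia.
  by rewrite ?e1 ?e2 ?hxM (a1 (leqW hxM)) (a2 (leqW hxM)) /=; case: (0 < x).
case: (eqVneq x M.+1) => hx.
- have e3 : (x <= M) = false by lia.
  by rewrite ?e3 hx ?ltnn ?leqnn ?eqxx (a1 (eq_leq hx)) (a2 (eq_leq hx)) /=; case: (0 < M.+1).
- have e3 : (x <= M) = false by lia.
  have e2 : (x <= M.+1) = false by lia.
  by rewrite ?e2 ?e3 /= ?andbF; case: (0 < x); rewrite /= ?andbF.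
Qed.

Lemma uniq_subs M d : uniq (subs M d).
Proof.
elim: M d => [|M IH] [|d] //=.
rewrite cat_uniq IH map_inj_uniq ?IH //; last exact: rcons_injl.
rewrite andbT; apply/hasP => -[w /mapP[v _ ->]].
by rewrite mem_subs => /andP[_]; rewrite all_rcons ltnn.
Qed.

Lemma incs_rcons v M w : w \in incs (rcons v M) ->
  w = rcons v M \/ exists2 x, x \in incs v & w = rcons x M.+1.
Proof.
elim: v w => [|k v IH] w.
  rewrite /= !inE => /orP[/eqP->|/eqP->]; last by left.
  by right; exists [::]; rewrite ?inE.
rewrite rcons_cons => /incsP [->|[w' hw' ->]].
  right; exists (map succn (k :: v)); first exact: incs_head.
  by rewrite -map_rcons.
case: (IH w' hw') => [->|[x hx ->]]; first by left.
by right; exists (k :: x) => //; exact: incs_cons.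
Qed.

Lemma dset_le_last k e s y : is_dset k e s -> y \in s -> y <= last 0 s.
Proof.
case/lastP: s => // s x; case: e => [|e]; first by move/is_dset_size; rewrite size_rcons.
rewrite is_dset_rcons last_rcons mem_rcons inE => /and3P[_ /allP h _] /orP[/eqP->|/h] //.
by move=> /= ?; lia.
Qed.

Lemma squash_last k n u v : is_dset k n.+1 u -> is_dset k n.+1 v -> last 0 u < last 0 v ->
  squashed_lt u v.
Proof.
move=> du dv hl; exists (last 0 v); split.
- case/lastP: v dv {hl} => [|v x]; first by move/is_dset_size.
  by rewrite last_rcons mem_rcons mem_head.
- by apply/negP => /(dset_le_last du); lia.
- move=> y hy; have -> : (y \in u) = false.
    by apply/negP => /(dset_le_last du); lia.
  by apply/esym/negP => /(dset_le_last dv); lia.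
Qed.

Lemma sq_bound u v B : squashed_lt u v -> all (fun y => y <= B) v -> all (fun y => y <= B) u.
Proof.
case=> x [xv xu hx] /allP hv; apply/allP => y yu.
have xB := hv x xv.
case: (leqP y x) => hyx; first lia.
by apply: hv; rewrite -(hx y hyx).
Qed.

Lemma near_bound u w B : all2 near u w -> all (fun y => y <= B) u -> all (fun y => y <= B.+1) w.
Proof.
elim: u w => [|x u IH] [|y w] //= /andP[h1 h2] /andP[h3 h4].
by rewrite (IH _ h2 h4) andbT; move: h1; rewrite /near; lia.
Qed.

Lemma maxP (G : seq (seq nat)) : G != [::] ->
  exists2 u, u \in G & forall v, v \in G -> last 0 v <= last 0 u.
Proof.
elim: G => // u G IH _; case: (eqVneq G [::]) => [->|hG].
  by exists u; rewrite ?mem_head // => v; rewrite inE => /eqP->.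
have [u' hu' hm] := IH hG.
case: (leqP (last 0 u) (last 0 u')) => h.
  exists u'; first by rewrite inE hu' orbT.
  by move=> v; rewrite inE => /orP[/eqP->|/hm].
exists u; first by rewrite mem_head.
move=> v; rewrite inE => /orP[/eqP->//|/hm]; lia.
Qed.

Lemma last_in (s : seq nat) : s != [::] -> last 0 s \in s.
Proof. by case: s => // x s _; exact: mem_last. Qed.

Theorem upperG d : forall G, uniq G -> compressed_in 0 d (fun u => u \in G) ->
  size (undup (incl G)) <= Phi d (size G).
Proof.
elim: d => [|e IH] G uG [hG hC].
  rewrite /=; case: G uG hG {hC} => [|u G] // uG hG.
  have sub : {subset undup (incl (u :: G)) <= [:: [::]]}.
    move=> w; rewrite mem_undup => /incl_mem [u' hu' hw].
    have := is_dset_size (hG u' hu'); case: u' hu' hw => // _.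
  by have := uniq_leq_size (undup_uniq _) sub; rewrite /=; lia.
case: (eqVneq G [::]) => [->|G0]; first by rewrite Phi0.
have [u0 hu0 hmax] := maxP G0.
have du0 := hG u0 hu0.
have u0n : u0 != [::] by apply/eqP => h; move: du0; rewrite h is_dset_nil.
set M := last 0 u0.
have M0 : 0 < M by apply: (is_dset_gt du0); exact: last_in.
have F1 : forall v, is_dset 0 e.+1 v -> last 0 v < M -> v \in G.
  by move=> v dv hv; apply: (hC v u0 hu0 dv); exact: squash_last dv du0 hv.
set R := [seq v <- subs M.-1 e | rcons v M \in G].
have memR : forall v, (v \in R) = [&& rcons v M \in G, is_dset 0 e v & all (fun y => y <= M.-1) v].
  by move=> v; rewrite mem_filter mem_subs.
have uR : uniq R by rewrite filter_uniq ?uniq_subs.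
set p := fun u : seq nat => last 0 u < M.
have hc1 : count p G = 'C(M.-1, e.+1).
  rewrite -size_filter -size_subs; apply: perm_size; apply: uniq_perm.
  - exact: filter_uniq.
  - exact: uniq_subs.
  move=> u; rewrite mem_filter mem_subs; apply/andP/andP.
    case=> hp hu; split; first exact: hG.
    apply/allP => y yu; have := dset_le_last (hG u hu) yu; rewrite /p in hp; lia.
  case=> du au; have ln : last 0 u <= M.-1.
    have un : u != [::] by apply/eqP => h; move: du; rewrite h is_dset_nil.
    by move/allP: au; apply; exact: last_in.
  by split; [rewrite /p; lia | apply: F1 => //; lia].
have hc2 : count (predC p) G = size R.
  rewrite -size_filter -(size_map (rcons^~ M) R); apply: perm_size; apply: uniq_perm.
  - exact: filter_uniq.
  - by rewrite map_inj_uniq //; exact: rcons_injl.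
  move=> u; rewrite mem_filter /= /p; apply/andP/mapP.
    case=> hp hu; have hl : last 0 u = M by have := hmax u hu; rewrite -/M; lia.
    have du := hG u hu.
    case/lastP: u hp hu hl du => [|v x] hp hu hl du; first by move: du; rewrite is_dset_nil.
    rewrite last_rcons in hl; rewrite hl in hu du *; exists v => //.
    move: du; rewrite is_dset_rcons memR hu => /and3P[dv av _]; rewrite dv /=.
    by apply: sub_all av => y /=; lia.
  case=> v hv ->; rewrite last_rcons ltnn; split => //.
  by move: hv; rewrite memR => /andP[].
have r0 : 0 < size R.
  rewrite -hc2 -has_count; apply/hasP; exists u0 => //=; by rewrite /p -/M ltnn.
have rC : size R <= 'C(M.-1, e) by rewrite -size_subs size_filter count_size.
have cR : compressed_in 0 e (fun v => v \in R).
  split; first by move=> v; rewrite memR => /and3P[].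
  move=> u v hv du hsq; move: hv; rewrite !memR => /and3P[hvG dv av].
  have au := sq_bound hsq av.
  rewrite du au andbT /=.
  rewrite andbT; apply: (hC (rcons u M) (rcons v M) hvG).
    rewrite is_dset_rcons du M0 andbT /=; apply: sub_all au => y /=; lia.
  case: hsq => x [xv xu hx]; exists x; split.
  - by rewrite mem_rcons inE xv orbT.
  - rewrite mem_rcons inE (negbTE xu) orbF; apply/eqP => xM.
    by move/allP: av => /(_ x xv); lia.
  - by move=> y xy; rewrite !mem_rcons !inE hx.
have IHR := IH R uR cR.
have sub : {subset undup (incl G) <= subs M e.+1 ++ map (rcons^~ M.+1) (undup (incl R))}.
  move=> w; rewrite mem_undup => /incl_mem [u hu hw]; rewrite mem_cat.
  have du := hG u hu; have dw := incs_dset du hw.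
  case: (ltnP (last 0 u) M) => hl.
    apply/orP; left; rewrite mem_subs dw /=.
    have h1 : all (fun y => y <= M.-1) u by apply/allP => y yu; have := dset_le_last du yu; lia.
    by have := near_bound (incs_rel hw) h1; have -> : M.-1.+1 = M by lia.
  have hlM : last 0 u = M by have := hmax u hu; rewrite -/M; lia.
  case/lastP: u hu hl hlM du hw => [|v x] hu hl hlM du hw; first by move: du; rewrite is_dset_nil.
  rewrite last_rcons in hlM; rewrite hlM in hu du hw.
  case: (incs_rcons hw) => [->|[x' hx' ->]].
    apply/orP; left; rewrite mem_subs du /=; apply/allP => y; rewrite mem_rcons inE => /orP[/eqP->//|yv].
    by move: du; rewrite is_dset_rcons => /and3P[_ /allP /(_ y yv) ? _]; lia.
  apply/orP; right; apply: map_f; rewrite mem_undup; apply/incl_mem; exists v => //.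
  rewrite memR hu; move: du; rewrite is_dset_rcons => /and3P[dv av _]; rewrite dv /=.
  by apply: sub_all av => y /=; lia.
have := uniq_leq_size (undup_uniq _) sub; rewrite size_cat size_map size_subs => hs.
have hsz : size G = 'C(M.-1, e.+1) + size R by rewrite -hc1 -hc2 count_predC.
rewrite hsz PhiB; last by rewrite r0 rC.
have -> : M.-1.+1 = M by lia.
move: hs IHR; move: (size (undup (incl G))) (size (undup (incl R))) (binomial M e.+1) (Phi e (size R)) => a b c f; lia.
Qed.

Lemma all2_rcons (r : nat -> nat -> bool) s t x y : size s = size t ->
  all2 r (rcons s x) (rcons t y) = all2 r s t && r x y.
Proof.
elim: s t => [|a s IH] [|b t] //=; first by rewrite andbT.
by move=> [hs]; rewrite IH // andbA.
Qed.

Lemma cw_sq k e u v : is_dset k e u -> is_dset k e v -> all2 leq v u -> v != u ->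
  squashed_lt v u.
Proof.
elim/last_ind: u e v => [|u x IH] e v du dv hvu hne.
  by move: (is_dset_size du) (is_dset_size dv) hne => <- /eqP; rewrite size_eq0 => /eqP->.
case: e du dv => [|e] du dv; first by move: (is_dset_size du); rewrite size_rcons.
case/lastP: v dv hvu hne => [|v y] dv hvu hne; first by move: (is_dset_size dv).
have sz : size v = size u.
  by move: (is_dset_size du) (is_dset_size dv); rewrite !size_rcons; lia.
rewrite all2_rcons // in hvu; case/andP: hvu => hvu yx.
move: (du) (dv); rewrite !is_dset_rcons => /and3P[du' au _] /and3P[dv' av _].
case: (ltngtP y x) yx => // hyx _.
  exists x; split.
  - by rewrite mem_rcons mem_head.
  - by apply/negP => /(dset_le_last dv); rewrite last_rcons; lia.
  - move=> z hz; have -> : (z \in rcons v y) = false.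
      by apply/negP => /(dset_le_last dv); rewrite last_rcons; lia.
    by apply/esym/negP => /(dset_le_last du); rewrite last_rcons; lia.
rewrite hyx in hne dv av *.
have hne' : v != u by apply: contra hne => /eqP->.
have [x0 [x0u x0v hx0]] := IH e v du' dv' hvu hne'.
exists x0; split.
- by rewrite mem_rcons inE x0u orbT.
- rewrite mem_rcons inE (negbTE x0v) orbF; apply/eqP => hx.
  by move/allP: au => /(_ x0 x0u); lia.
- by move=> z hz; rewrite !mem_rcons !inE hx0.
Qed.

Lemma DC_of_compressed d H : 2 <= d -> (forall u, u \in H -> is_dset 0 d u) ->
  left_compressed d H -> right_compressed d H -> DC 0 H.
Proof.
move=> d2 hH lc rc u v hu hv hvu.
have du := hH u hu; rewrite (is_dset_size du) in hv.
case: d d2 hH du hv lc rc => [|d] // d2 hH du hv lc rc.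
case/lastP: u hu du hvu => [|u M] hu du hvu; first by move: (is_dset_size du).
case/lastP: v hv hvu => [|v M'] dv hvu; first by move: (is_dset_size dv).
have sz : size v = size u.
  by move: (is_dset_size du) (is_dset_size dv); rewrite !size_rcons => -[h1] [h2]; rewrite h1 h2.
rewrite all2_rcons // in hvu; case/andP: hvu => hvu hM.
move: (du) (dv); rewrite !is_dset_rcons => /and3P[du' au M0] /and3P[dv' av M'0].
have hw : rcons v M \in H.
  case: (eqVneq v u) => [->//|hne].
  have [_ rc2] := rc M M0.
  have hu' : hatFd d.+1 M H u by split.
  have := rc2 v u hu' dv' (cw_sq du' dv' hvu hne).
  by case.
case: (eqVneq M' M) => [->//|hMM].
have hMl : M' < M by lia.
case: v dv' av hvu dv hw sz => [|h v] dv' av hvu dv hw sz.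
  by move: (is_dset_size dv') d2 => <-.
have h0 : 0 < h by move: dv; rewrite rcons_cons is_dset_cons => /andP[].
have [_ lc2] := lc h h0.
have dM : is_dset h d (rcons v M).
  by have := hH _ hw; rewrite rcons_cons is_dset_cons => /andP[_ ->].
have dM' : is_dset h d (rcons v M').
  by move: dv; rewrite rcons_cons is_dset_cons => /andP[_ ->].
have hw' : hatF1 d.+1 h H (rcons v M) by split => //; rewrite -rcons_cons.
have sq : squashed_lt (rcons v M') (rcons v M).
  apply: (cw_sq dM dM').
    by rewrite all2_rcons // (all2_refl v) /=.
  by apply/eqP => hh; move: (congr1 (last 0) hh); rewrite !last_rcons => e; rewrite e eqxx in hMM.
have [_ ] := lc2 _ _ hw' dM' sq.
by rewrite rcons_cons.
Qed.

Theorem mainTheorem10 (d : nat) (G H : seq (seq nat)) :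
  2 <= d ->
  uniq G -> uniq H ->
  size G = size H ->
  compressed_in 0 d (fun u => u \in G) ->
  (forall u, u \in H -> is_dset 0 d u) ->
  left_compressed d H -> right_compressed d H ->
  exists sG sH, [/\ enumerates sG (IncF G), enumerates sH (IncF H)
                  & size sG <= size sH].
Proof.
move=> d2 uG uH hs cG hH lH rH.
have enumP : forall F, (forall u, u \in F -> is_dset 0 d u) ->
    enumerates (undup (incl F)) (IncF F).
  move=> F hF; split; first exact: undup_uniq.
  move=> w; rewrite mem_undup; split.
    case/incl_mem => u hu hw; have du := hF u hu.
    have [pi [hp ->]] := Inc1_incs (is_dset_sorted du) hw.
    by exists u, pi.
  case=> u [pi [hu hp ->]]; apply/incl_mem; exists u => //.
  have du := hF u hu; apply: incs_Inc1 => //; first exact: is_dset_sorted du.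
  by case/and3P: du.
exists (undup (incl G)), (undup (incl H)); split.
- by apply: enumP; case: cG.
- exact: enumP.
have h1 := upperG uG cG.
have h2 := lowerA uH hH (DC_of_compressed d2 hH lH rH).
by rewrite hs in h1; apply: leq_trans h1 h2.
Qed.
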